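(* Let $H_{44}$ and $H_{521}$ be the term-normalized complete homogeneous symmetric polynomials in three variables $x_1,x_2,x_3$ associated to the partitions $(4,4)$ and $(5,2,1)$ of $8$. Then the polynomial $(H_{44}-H_{521})(x_1^2,x_2^2,x_3^2)$ is a sum of squares of polynomials with rational coefficients (in fact a positive rational combination of $41$ squares), so $H_{44}-H_{521}\ge 0$ on $\mathbb{R}^3_{\ge 0}$, while the partitions $(4,4)$ and $(5,2,1)$ are incomparable in dominance order. Thus $H_{44}-H_{521}$ is a counterexample to the statement ''$H_\mu - H_\lambda \geq 0$ on the nonnegative orthant implies $\mu$ dominates $\lambda$'', and it is degree-minimal: there is no pair of dominance-incomparable partitions $\lambda,\mu$ with $|\lambda|=|\mu|\le 7$ such that $H_\mu-H_\lambda\ge 0$ on the nonnegative orthant.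
   Context: For an integer $d\ge 0$, $h_d(x_1,\dots,x_n)$ denotes the sum of all monomials of degree $d$ in $x_1,\dots,x_n$ (with $h_0=1$), and for a partition $\lambda=(\lambda_1\ge\lambda_2\ge\cdots)$ one sets $h_\lambda=\prod_i h_{\lambda_i}$. The term-normalized version is $H_\lambda(x)=h_\lambda(x)/h_\lambda(1,\dots,1)$. For partitions $\lambda,\mu$ of the same integer, $\mu$ dominates $\lambda$ (written $\mu\succeq\lambda$) if $\mu_1+\cdots+\mu_k\ge\lambda_1+\cdots+\lambda_k$ for all $k$; $\lambda,\mu$ are incomparable if neither dominates the other. A polynomial is a sum of squares if it equals $\sum_i d_i q_i^2$ with $d_i>0$ and $q_i$ polynomials. Explicitly, $(H_{44}-H_{521})(x_1^2,x_2^2,x_3^2)=\frac{1}{9450}\big(17\sum x_i^{16}+9\sum_{i\ne j} x_i^{14}x_j^{2}+\sum_{i\ne j}x_i^{12}x_j^4+18\sum_{i\ne j}x_i^{10}x_j^6+60\sum_{i<j}x_i^8x_j^8-32\sum x_i^{12}x_j^2x_k^2-6\cdot(\ldots)\big)$ as given in the paper; its nonnegativity is meant on $\mathbb{R}^3_{\ge0}$ for the three-variable polynomial. *)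

(* Defs.v *)
From HB Require Import structures.
From mathcomp Require Import all_boot all_order all_algebra.
From mathcomp Require Import mpoly.
Set Implicit Arguments. Unset Strict Implicit. Unset Printing Implicit Defensive.
Import Order.TTheory GRing.Theory Num.Theory.
Local Open Scope ring_scope.

Definition is_partition (l : seq nat) : bool :=
  sorted geq l && all (fun k => 0 < k)%N l.

Definition psize (l : seq nat) : nat := sumn l.

Definition dominates (mu lam : seq nat) : Prop :=
  forall k : nat, (sumn (take k lam) <= sumn (take k mu))%N.

Definition incomparable (lam mu : seq nat) : Prop :=
  ~ dominates mu lam /\ ~ dominates lam mu.

Definition hcomp (R : comRingType) (n d : nat) : {mpoly R[n]} :=
  \sum_(m : 'X_{1..n < d.+1} | mdeg m == d) 'X_[m].

Definition hpart (R : comRingType) (n : nat) (lam : seq nat) : {mpoly R[n]} :=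
  \prod_(k <- lam) hcomp R n k.

Definition Hnorm (R : fieldType) (n : nat) (lam : seq nat) : {mpoly R[n]} :=
  ((hpart R n lam).@[fun _ => 1])^-1 *: hpart R n lam.

Definition sqsubst (R : comRingType) (n : nat) (p : {mpoly R[n]}) : {mpoly R[n]} :=
  p \mPo [tuple ('X_i ^+ 2) | i < n].

Definition sos_cert (n : nat) (p : {mpoly rat[n]}) (s : seq (rat * {mpoly rat[n]})) : Prop :=
  all (fun dq => 0 < dq.1) s /\ p = \sum_(dq <- s) dq.1 *: dq.2 ^+ 2.

(* Main.v *)
Require Import Defs.
From Stdlib Require Import ZArith.
From HB Require Import structures.
From mathcomp Require Import all_boot all_order all_algebra.
From mathcomp Require Import mpoly.
From mathcomp Require Import ssrZ.
From mathcomp Require Import ring zify lra.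
Set Implicit Arguments. Unset Strict Implicit. Unset Printing Implicit Defensive.
Import Order.TTheory GRing.Theory Num.Theory.
Local Open Scope ring_scope.

Definition hsum (R : comRingType) (d : nat) (y0 y1 y2 : R) : R :=
  \sum_(a < d.+1) \sum_(b < d.+1 | (a + b <= d)%N) y0 ^+ a * y1 ^+ b * y2 ^+ (d - a - b).

Lemma hcompE (R : comRingType) d :
  hcomp R 3 d = hsum d 'X_0 'X_1 'X_2.
Proof.
rewrite /hcomp /hsum pair_big_dep /=.
pose mk (p : 'I_d.+1 * 'I_d.+1) : 'X_{1..3} :=
  [multinom (nth 0%N [:: (p.1 : nat); (p.2 : nat); (d - p.1 - p.2)%N] i) | i < 3].
pose h (p : 'I_d.+1 * 'I_d.+1) : 'X_{1..3 < d.+1} := insubd bm0 (mk p).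
pose h' (m : 'X_{1..3 < d.+1}) : 'I_d.+1 * 'I_d.+1 := (inord (m ord0), inord (m (lift ord0 ord0))).
have mdeg3 (m : 'X_{1..3}) : mdeg m = (m ord0 + m (lift ord0 ord0) + m ord_max)%N.
  rewrite mdegE !big_ord_recr big_ord0 /= add0n; congr (m _ + m _ + _)%N; exact: val_inj.
have mkE (p : 'I_d.+1 * 'I_d.+1) : (p.1 + p.2 <= d)%N -> mdeg (mk p) = d.
  move=> hp; rewrite mdeg3 !mnmE /=; lia.
rewrite (reindex_onto h h'); last first.
  move=> m /eqP md; have := mdeg3 m; rewrite md => e.
  apply: val_inj; rewrite /h insubdK; last first.
    by rewrite -topredE /= mkE //= !inordK; lia.
  apply/mnmP => i; rewrite mnmE /= !inordK; try lia.
  case: i => [[|[|[|i]]] Hi] //=.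
  - by congr (m _); apply: val_inj.
  - by congr (m _); apply: val_inj.
  - have -> : (Ordinal Hi) = ord_max by apply: val_inj.
    lia.
have hE (p : 'I_d.+1 * 'I_d.+1) : (p.1 + p.2 <= d)%N -> val (h p) = mk p.
  by move=> hp; rewrite /h insubdK // -topredE /= mkE.
apply: eq_big => [[a b]|[a b] /andP[/eqP hd _]] /=.
  case: (boolP (a + b <= d)%N) => hp.
    rewrite /h' (hE (a, b)) // (mkE (a, b)) // eqxx /=; apply/eqP.
    congr (_, _); apply: val_inj; rewrite /= mnmE /= inordK //; lia.
  apply/negbTE; rewrite negb_and; apply/orP.
  rewrite /h /insubd; case: insubP => [u Hin Hu|Hn] /=.
    left; have : mdeg (val u) = (a + b + (d - a - b))%N by rewrite Hu mdeg3 !mnmE.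
    move=> /= ->; apply/eqP; move: hp; rewrite -ltnNge; lia.
  left; rewrite mdeg0; have := ltn_ord a; have := ltn_ord b; move=> ? ?; apply/eqP; move: hp; rewrite -ltnNge; lia.
have hp : (a + b <= d)%N.
  apply/negP => /negP; rewrite -ltnNge => hp; move: hd; rewrite /h /insubd; case: insubP => [u _ Hu|_] /=.
    have : mdeg (val u) = (a + b + (d - a - b))%N by rewrite Hu mdeg3 !mnmE.
    move=> /= ->; lia.
  rewrite mdeg0 => d0; have := ltn_ord a; have := ltn_ord b; lia.
rewrite (hE (a, b)) // mpolyXE_id !big_ord_recr big_ord0 /= mul1r !mnmE /=.
by congr ('X_ _ ^+ _ * 'X_ _ ^+ _ * 'X_ _ ^+ _); apply: val_inj.
Qed.

Section HX.
Variable R : comRingType.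
Definition hx1 (y0 y1 y2 : R) : R := y0 + y1 + y2.
Definition hx2 (y0 y1 y2 : R) : R := y0^+2 + y0*y1 + y0*y2 + y1^+2 + y1*y2 + y2^+2.
Definition hx3 (y0 y1 y2 : R) : R := y0^+3 + y0^+2*y1 + y0^+2*y2 + y0*y1^+2 + y0*y1*y2 + y0*y2^+2 + y1^+3 + y1^+2*y2 + y1*y2^+2 + y2^+3.
Definition hx4 (y0 y1 y2 : R) : R := y0^+4 + y0^+3*y1 + y0^+3*y2 + y0^+2*y1^+2 + y0^+2*y1*y2 + y0^+2*y2^+2 + y0*y1^+3 + y0*y1^+2*y2 + y0*y1*y2^+2 + y0*y2^+3 + y1^+4 + y1^+3*y2 + y1^+2*y2^+2 + y1*y2^+3 + y2^+4.
Definition hx5 (y0 y1 y2 : R) : R := y0^+5 + y0^+4*y1 + y0^+4*y2 + y0^+3*y1^+2 + y0^+3*y1*y2 + y0^+3*y2^+2 + y0^+2*y1^+3 + y0^+2*y1^+2*y2 + y0^+2*y1*y2^+2 + y0^+2*y2^+3 + y0*y1^+4 + y0*y1^+3*y2 + y0*y1^+2*y2^+2 + y0*y1*y2^+3 + y0*y2^+4 + y1^+5 + y1^+4*y2 + y1^+3*y2^+2 + y1^+2*y2^+3 + y1*y2^+4 + y2^+5.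
Definition hx6 (y0 y1 y2 : R) : R := y0^+6 + y0^+5*y1 + y0^+5*y2 + y0^+4*y1^+2 + y0^+4*y1*y2 + y0^+4*y2^+2 + y0^+3*y1^+3 + y0^+3*y1^+2*y2 + y0^+3*y1*y2^+2 + y0^+3*y2^+3 + y0^+2*y1^+4 + y0^+2*y1^+3*y2 + y0^+2*y1^+2*y2^+2 + y0^+2*y1*y2^+3 + y0^+2*y2^+4 + y0*y1^+5 + y0*y1^+4*y2 + y0*y1^+3*y2^+2 + y0*y1^+2*y2^+3 + y0*y1*y2^+4 + y0*y2^+5 + y1^+6 + y1^+5*y2 + y1^+4*y2^+2 + y1^+3*y2^+3 + y1^+2*y2^+4 + y1*y2^+5 + y2^+6.
Definition hx7 (y0 y1 y2 : R) : R := y0^+7 + y0^+6*y1 + y0^+6*y2 + y0^+5*y1^+2 + y0^+5*y1*y2 + y0^+5*y2^+2 + y0^+4*y1^+3 + y0^+4*y1^+2*y2 + y0^+4*y1*y2^+2 + y0^+4*y2^+3 + y0^+3*y1^+4 + y0^+3*y1^+3*y2 + y0^+3*y1^+2*y2^+2 + y0^+3*y1*y2^+3 + y0^+3*y2^+4 + y0^+2*y1^+5 + y0^+2*y1^+4*y2 + y0^+2*y1^+3*y2^+2 + y0^+2*y1^+2*y2^+3 + y0^+2*y1*y2^+4 + y0^+2*y2^+5 + y0*y1^+6 + y0*y1^+5*y2 + y0*y1^+4*y2^+2 + y0*y1^+3*y2^+3 + y0*y1^+2*y2^+4 + y0*y1*y2^+5 + y0*y2^+6 + y1^+7 + y1^+6*y2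 + y1^+5*y2^+2 + y1^+4*y2^+3 + y1^+3*y2^+4 + y1^+2*y2^+5 + y1*y2^+6 + y2^+7.
End HX.
Lemma hsum1 (R : comRingType) (y0 y1 y2 : R) : hsum 1 y0 y1 y2 = hx1 y0 y1 y2.
Proof.
rewrite /hsum /hx1; under eq_bigr do rewrite big_mkcond.
rewrite !big_ord_recr !big_ord0 /=; ring.
Qed.
Lemma hsum2 (R : comRingType) (y0 y1 y2 : R) : hsum 2 y0 y1 y2 = hx2 y0 y1 y2.
Proof.
rewrite /hsum /hx2; under eq_bigr do rewrite big_mkcond.
rewrite !big_ord_recr !big_ord0 /=; ring.
Qed.
Lemma hsum3 (R : comRingType) (y0 y1 y2 : R) : hsum 3 y0 y1 y2 = hx3 y0 y1 y2.
Proof.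
rewrite /hsum /hx3; under eq_bigr do rewrite big_mkcond.
rewrite !big_ord_recr !big_ord0 /=; ring.
Qed.
Lemma hsum4 (R : comRingType) (y0 y1 y2 : R) : hsum 4 y0 y1 y2 = hx4 y0 y1 y2.
Proof.
rewrite /hsum /hx4; under eq_bigr do rewrite big_mkcond.
rewrite !big_ord_recr !big_ord0 /=; ring.
Qed.
Lemma hsum5 (R : comRingType) (y0 y1 y2 : R) : hsum 5 y0 y1 y2 = hx5 y0 y1 y2.
Proof.
rewrite /hsum /hx5; under eq_bigr do rewrite big_mkcond.
rewrite !big_ord_recr !big_ord0 /=; ring.
Qed.
Lemma hsum6 (R : comRingType) (y0 y1 y2 : R) : hsum 6 y0 y1 y2 = hx6 y0 y1 y2.
Proof.
rewrite /hsum /hx6; under eq_bigr do rewrite big_mkcond.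
rewrite !big_ord_recr !big_ord0 /=; ring.
Qed.
Lemma hsum7 (R : comRingType) (y0 y1 y2 : R) : hsum 7 y0 y1 y2 = hx7 y0 y1 y2.
Proof.
rewrite /hsum /hx7; under eq_bigr do rewrite big_mkcond.
rewrite !big_ord_recr !big_ord0 /=; ring.
Qed.


Section RS.
Variable R : comRingType.
Definition r0 (y0 y1 y2 : R) : R := 68%:R * y0^+4 - 4%:R * y0^+3*y1 - 4%:R * y0^+3*y2 - 17%:R * y0^+2*y1^+2 - 25%:R * y0^+2*y1*y2 - 17%:R * y0^+2*y2^+2 - 28%:R * y0*y1^+2*y2 - 18%:R * y0*y1*y2^+2 - 5%:R * y0*y2^+3 + 36%:R * y1^+4 - 1%:R * y1^+3*y2 - 15%:R * y1^+2*y2^+2 - 3%:R * y1*y2^+3 + 33%:R * y2^+4.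
Definition r1 (y0 y1 y2 : R) : R := 778%:R * y0^+3*y1 - 395%:R * y0^+3*y2 + 323%:R * y0^+2*y1^+2 - 25%:R * y0^+2*y1*y2 - 510%:R * y0^+2*y2^+2 + 272%:R * y0*y1^+3 - 28%:R * y0*y1^+2*y2 - 188%:R * y0*y1*y2^+2 - 107%:R * y0*y2^+3 + 104%:R * y1^+4 - 154%:R * y1^+3*y2 - 151%:R * y1^+2*y2^+2 + 65%:R * y1*y2^+3 + 16%:R * y2^+4.
Definition r2 (y0 y1 y2 : R) : R := (int_of_Z (Zpos 26427%positive))%:~R * y0^+3*y2 - (int_of_Z (Zpos 15057%positive))%:~R * y0^+2*y1^+2 - (int_of_Z (Zpos 8727%positive))%:~R * y0^+2*y1*y2 + (int_of_Z (Zpos 6822%positive))%:~R * y0^+2*y2^+2 - (int_of_Z (Zpos 1460%positive))%:~R * y0*y1^+3 - (int_of_Z (Zpos 3488%positive))%:~R * y0*y1^+2*y2 - (int_of_Z (Zpos 6748%positive))%:~R * y0*y1*y2^+2 + (int_of_Z (Zpos 12067%positive))%:~R * y0*y2^+3 + (int_of_Z (Zpos 2508%positive))%:~R * y1^+4 - 512%:R * y1^+3*y2 - (int_of_Z (Zpos 10419%positive))%:~R * y1^+2*y2^+2 - (int_of_Z (Zpos 6407%positive))%:~R * y1*y2^+3 + (int_of_Z (Zpos 4994%positive))%:~R * y2^+4.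
Definition r3 (y0 y1 y2 : R) : R := (int_of_Z (Zpos 1579807%positive))%:~R * y0^+2*y1^+2 + (int_of_Z (Zpos 69395%positive))%:~R * y0^+2*y1*y2 + (int_of_Z (Zpos 183263%positive))%:~R * y0^+2*y2^+2 + (int_of_Z (Zpos 362512%positive))%:~R * y0*y1^+3 + (int_of_Z (Zpos 180740%positive))%:~R * y0*y1^+2*y2 - (int_of_Z (Zpos 170914%positive))%:~R * y0*y1*y2^+2 + (int_of_Z (Zpos 77527%positive))%:~R * y0*y2^+3 - (int_of_Z (Zpos 306664%positive))%:~R * y1^+4 - (int_of_Z (Zpos 805637%positive))%:~R * y1^+3*y2 - (int_of_Z (Zpos 517707%positive))%:~R * y1^+2*y2^+2 - (int_of_Z (Zpos 459107%positive))%:~R * y1*y2^+3 - (int_of_Z (Zpos 193215%positive))%:~R * y2^+4.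
Definition r4 (y0 y1 y2 : R) : R := (int_of_Z (Zpos 52087484%positive))%:~R * y0^+2*y1*y2 + (int_of_Z (Zpos 14934231%positive))%:~R * y0^+2*y2^+2 - (int_of_Z (Zpos 4040344%positive))%:~R * y0*y1^+3 - (int_of_Z (Zpos 83538%positive))%:~R * y0*y1^+2*y2 + (int_of_Z (Zpos 3753302%positive))%:~R * y0*y1*y2^+2 + (int_of_Z (Zpos 1555844%positive))%:~R * y0*y2^+3 - (int_of_Z (Zpos 20729089%positive))%:~R * y1^+4 - (int_of_Z (Zpos 2956977%positive))%:~R * y1^+3*y2 - (int_of_Z (Zpos 15130121%positive))%:~R * y1^+2*y2^+2 - (int_of_Z (Zpos 8100082%positive))%:~R * y1*y2^+3 - (int_of_Z (Zpos 21290710%positive))%:~R * y2^+4.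
Definition r5 (y0 y1 y2 : R) : R := (int_of_Z (Zpos 2005727833%positive))%:~R * y0^+2*y2^+2 + (int_of_Z (Zpos 130879288%positive))%:~R * y0*y1^+3 - (int_of_Z (Zpos 390771790%positive))%:~R * y0*y1^+2*y2 + (int_of_Z (Zpos 227683490%positive))%:~R * y0*y1*y2^+2 + (int_of_Z (Zpos 420998872%positive))%:~R * y0*y2^+3 - (int_of_Z (Zpos 54703979%positive))%:~R * y1^+4 - (int_of_Z (Zpos 564079339%positive))%:~R * y1^+3*y2 - (int_of_Z (Zpos 503437435%positive))%:~R * y1^+2*y2^+2 - (int_of_Z (Zpos 996754838%positive))%:~R * y1*y2^+3 - (int_of_Z (Zpos 275542102%positive))%:~R * y2^+4.
Definition r6 (y0 y1 y2 : R) : R := (int_of_Z (Zpos 226122031634%positive))%:~R * y0*y1^+3 - (int_of_Z (Zpos 14221238710%positive))%:~R * y0*y1^+2*y2 + (int_of_Z (Zpos 14436631546%positive))%:~R * y0*y1*y2^+2 + (int_of_Z (Zpos 36713914550%positive))%:~R * y0*y2^+3 - (int_of_Z (Zpos 29561896356%positive))%:~R * y1^+4 - (int_of_Z (Zpos 66557750200%positive))%:~R * y1^+3*y2 - (int_of_Z (Zpos 122601480240%positive))%:~R * y1^+2*y2^+2 - (int_of_Z (Zpos 41825018269%positive))%:~R * y1*y2^+3 - (int_of_Z (Zpos 2505193955%positive))%:~R * y2^+4.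
Definition r7 (y0 y1 y2 : R) : R := (int_of_Z (Zpos 3575257612904%positive))%:~R * y0*y1^+2*y2 + (int_of_Z (Zpos 520839244386%positive))%:~R * y0*y1*y2^+2 - (int_of_Z (Zpos 59911526356%positive))%:~R * y0*y2^+3 - (int_of_Z (Zpos 1816864109418%positive))%:~R * y1^+4 - (int_of_Z (Zpos 341150963676%positive))%:~R * y1^+3*y2 + (int_of_Z (Zpos 479080487026%positive))%:~R * y1^+2*y2^+2 - (int_of_Z (Zpos 776458434341%positive))%:~R * y1*y2^+3 - (int_of_Z (Zpos 1580792310525%positive))%:~R * y2^+4.
Definition r8 (y0 y1 y2 : R) : R := (int_of_Z (Zpos 61372522652942%positive))%:~R * y0*y1*y2^+2 - (int_of_Z (Zpos 3480129228204%positive))%:~R * y0*y2^+3 - (int_of_Z (Zpos 23938700763582%positive))%:~R * y1^+4 - (int_of_Z (Zpos 8196961205540%positive))%:~R * y1^+3*y2 + (int_of_Z (Zpos 9554399432014%positive))%:~R * y1^+2*y2^+2 - (int_of_Z (Zpos 2496679049887%positive))%:~R * y1*y2^+3 - (int_of_Z (Zpos 32814451837743%positive))%:~R * y2^+4.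
Definition r9 (y0 y1 y2 : R) : R := (int_of_Z (Zpos 355353322842042%positive))%:~R * y0*y2^+3 + (int_of_Z (Zpos 8438365617674%positive))%:~R * y1^+4 - (int_of_Z (Zpos 62216659173458%positive))%:~R * y1^+3*y2 - (int_of_Z (Zpos 158458318977188%positive))%:~R * y1^+2*y2^+2 - (int_of_Z (Zpos 104240135610653%positive))%:~R * y1*y2^+3 - (int_of_Z (Zpos 38876574698417%positive))%:~R * y2^+4.
Definition r10 (y0 y1 y2 : R) : R := (int_of_Z (Zpos 1588787693277398%positive))%:~R * y1^+4 - (int_of_Z (Zpos 728430642370177%positive))%:~R * y1^+3*y2 - (int_of_Z (Zpos 686150532067894%positive))%:~R * y1^+2*y2^+2 - (int_of_Z (Zpos 233017163511776%positive))%:~R * y1*y2^+3 + (int_of_Z (Zpos 58810644672449%positive))%:~R * y2^+4.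
Definition r11 (y0 y1 y2 : R) : R := (int_of_Z (Zpos 29404803520048077%positive))%:~R * y1^+3*y2 - (int_of_Z (Zpos 12544896976108796%positive))%:~R * y1^+2*y2^+2 - (int_of_Z (Zpos 9914151634471502%positive))%:~R * y1*y2^+3 - (int_of_Z (Zpos 6945754909467779%positive))%:~R * y2^+4.
Definition r12 (y0 y1 y2 : R) : R := (int_of_Z (Zpos 36641311091370421%positive))%:~R * y1^+2*y2^+2 - (int_of_Z (Zpos 13352463410334488%positive))%:~R * y1*y2^+3 - (int_of_Z (Zpos 23288847681035933%positive))%:~R * y2^+4.
Definition r13 (y0 y1 y2 : R) : R := 1%:R * y1*y2^+3 - 1%:R * y2^+4.
Definition r14 (y0 y1 y2 : R) : R := 22%:R * y0^+3 - 2%:R * y0^+2*y1 - 7%:R * y0^+2*y2 - 1%:R * y0*y1^+2 - 10%:R * y0*y1*y2 - 8%:R * y0*y2^+2 + 10%:R * y1^+3 - 3%:R * y1^+2*y2 - 4%:R * y1*y2^+2 + 3%:R * y2^+3.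
Definition r15 (y0 y1 y2 : R) : R := 196%:R * y0^+2*y1 - 62%:R * y0^+2*y2 + 76%:R * y0*y1^+2 + 1%:R * y0*y1*y2 - 63%:R * y0*y2^+2 - 12%:R * y1^+3 - 58%:R * y1^+2*y2 - 48%:R * y1*y2^+2 - 30%:R * y2^+3.
Definition r16 (y0 y1 y2 : R) : R := (int_of_Z (Zpos 1175%positive))%:~R * y0^+2*y2 - 307%:R * y0*y1^+2 - 211%:R * y0*y1*y2 + 63%:R * y0*y2^+2 - 16%:R * y1^+3 - 257%:R * y1^+2*y2 - 358%:R * y1*y2^+2 - 89%:R * y2^+3.
Definition r17 (y0 y1 y2 : R) : R := (int_of_Z (Zpos 33974%positive))%:~R * y0*y1^+2 - 123%:R * y0*y1*y2 - (int_of_Z (Zpos 4641%positive))%:~R * y0*y2^+2 - (int_of_Z (Zpos 2738%positive))%:~R * y1^+3 - (int_of_Z (Zpos 11226%positive))%:~R * y1^+2*y2 - (int_of_Z (Zpos 10444%positive))%:~R * y1*y2^+2 - (int_of_Z (Zpos 4802%positive))%:~R * y2^+3.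
Definition r18 (y0 y1 y2 : R) : R := (int_of_Z (Zpos 375999%positive))%:~R * y0*y1*y2 - (int_of_Z (Zpos 84896%positive))%:~R * y0*y2^+2 - (int_of_Z (Zpos 152289%positive))%:~R * y1^+3 - (int_of_Z (Zpos 28027%positive))%:~R * y1^+2*y2 - (int_of_Z (Zpos 49874%positive))%:~R * y1*y2^+2 - (int_of_Z (Zpos 60913%positive))%:~R * y2^+3.
Definition r19 (y0 y1 y2 : R) : R := (int_of_Z (Zpos 10062893%positive))%:~R * y0*y2^+2 - (int_of_Z (Zpos 2163339%positive))%:~R * y1^+3 - (int_of_Z (Zpos 3371909%positive))%:~R * y1^+2*y2 - (int_of_Z (Zpos 1203076%positive))%:~R * y1*y2^+2 - (int_of_Z (Zpos 3324569%positive))%:~R * y2^+3.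
Definition r20 (y0 y1 y2 : R) : R := (int_of_Z (Zpos 149510907%positive))%:~R * y1^+3 - (int_of_Z (Zpos 67199698%positive))%:~R * y1^+2*y2 - (int_of_Z (Zpos 88507226%positive))%:~R * y1*y2^+2 + (int_of_Z (Zpos 6196017%positive))%:~R * y2^+3.
Definition r21 (y0 y1 y2 : R) : R := (int_of_Z (Zpos 1093383157%positive))%:~R * y1^+2*y2 - (int_of_Z (Zpos 553635163%positive))%:~R * y1*y2^+2 - (int_of_Z (Zpos 539747994%positive))%:~R * y2^+3.
Definition r22 (y0 y1 y2 : R) : R := 1%:R * y1*y2^+2 - 1%:R * y2^+3.
Definition r23 (y0 y1 y2 : R) : R := 22%:R * y0^+3 - 7%:R * y0^+2*y1 - 2%:R * y0^+2*y2 - 8%:R * y0*y1^+2 - 10%:R * y0*y1*y2 - 1%:R * y0*y2^+2 + 3%:R * y1^+3 - 4%:R * y1^+2*y2 - 3%:R * y1*y2^+2 + 10%:R * y2^+3.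
Definition r24 (y0 y1 y2 : R) : R := 303%:R * y0^+2*y1 - 124%:R * y0^+2*y2 + 54%:R * y0*y1^+2 - 48%:R * y0*y1*y2 - 117%:R * y0*y2^+2 - 1%:R * y1^+3 - 50%:R * y1^+2*y2 - 21%:R * y1*y2^+2 + 4%:R * y2^+3.
Definition r25 (y0 y1 y2 : R) : R := (int_of_Z (Zpos 4700%positive))%:~R * y0^+2*y2 - (int_of_Z (Zpos 1431%positive))%:~R * y0*y1^+2 - 243%:R * y0*y1*y2 + (int_of_Z (Zpos 1434%positive))%:~R * y0*y2^+2 - 832%:R * y1^+3 - (int_of_Z (Zpos 1604%positive))%:~R * y1^+2*y2 - (int_of_Z (Zpos 1716%positive))%:~R * y1*y2^+2 - 308%:R * y2^+3.
Definition r26 (y0 y1 y2 : R) : R := (int_of_Z (Zpos 66813%positive))%:~R * y0*y1^+2 - (int_of_Z (Zpos 11711%positive))%:~R * y0*y1*y2 - (int_of_Z (Zpos 9282%positive))%:~R * y0*y2^+2 - (int_of_Z (Zpos 17564%positive))%:~R * y1^+3 - (int_of_Z (Zpos 3108%positive))%:~R * y1^+2*y2 - (int_of_Z (Zpos 17132%positive))%:~R * y1*y2^+2 - (int_of_Z (Zpos 8016%positive))%:~R * y2^+3.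
Definition r27 (y0 y1 y2 : R) : R := (int_of_Z (Zpos 710269%positive))%:~R * y0*y1*y2 - (int_of_Z (Zpos 26625%positive))%:~R * y0*y2^+2 - (int_of_Z (Zpos 163061%positive))%:~R * y1^+3 - (int_of_Z (Zpos 104751%positive))%:~R * y1^+2*y2 - (int_of_Z (Zpos 96650%positive))%:~R * y1*y2^+2 - (int_of_Z (Zpos 319182%positive))%:~R * y2^+3.
Definition r28 (y0 y1 y2 : R) : R := (int_of_Z (Zpos 10062893%positive))%:~R * y0*y2^+2 - (int_of_Z (Zpos 1885094%positive))%:~R * y1^+3 - (int_of_Z (Zpos 3263611%positive))%:~R * y1^+2*y2 - (int_of_Z (Zpos 3791163%positive))%:~R * y1*y2^+2 - (int_of_Z (Zpos 1123025%positive))%:~R * y2^+3.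
Definition r29 (y0 y1 y2 : R) : R := (int_of_Z (Zpos 91218107%positive))%:~R * y1^+3 - (int_of_Z (Zpos 58301280%positive))%:~R * y1^+2*y2 - (int_of_Z (Zpos 39112844%positive))%:~R * y1*y2^+2 + (int_of_Z (Zpos 6196017%positive))%:~R * y2^+3.
Definition r30 (y0 y1 y2 : R) : R := (int_of_Z (Zpos 970183821%positive))%:~R * y1^+2*y2 - (int_of_Z (Zpos 203781367%positive))%:~R * y1*y2^+2 - (int_of_Z (Zpos 766402454%positive))%:~R * y2^+3.
Definition r31 (y0 y1 y2 : R) : R := 1%:R * y1*y2^+2 - 1%:R * y2^+3.
Definition r32 (y0 y1 y2 : R) : R := 12%:R * y0^+3 - 5%:R * y0^+2*y1 - 5%:R * y0^+2*y2 - 1%:R * y0*y1^+2 - 4%:R * y0*y1*y2 - 1%:R * y0*y2^+2 + 4%:R * y1^+3 - 2%:R * y1^+2*y2 - 2%:R * y1*y2^+2 + 4%:R * y2^+3.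
Definition r33 (y0 y1 y2 : R) : R := 203%:R * y0^+2*y1 + 23%:R * y0^+2*y2 + 55%:R * y0*y1^+2 - 8%:R * y0*y1*y2 - 17%:R * y0*y2^+2 - 88%:R * y1^+3 - 70%:R * y1^+2*y2 - 58%:R * y1*y2^+2 - 40%:R * y2^+3.
Definition r34 (y0 y1 y2 : R) : R := (int_of_Z (Zpos 3390%positive))%:~R * y0^+2*y2 - 393%:R * y0*y1^+2 - 120%:R * y0*y1*y2 + 963%:R * y0*y2^+2 - 508%:R * y1^+3 - 847%:R * y1^+2*y2 - (int_of_Z (Zpos 1073%positive))%:~R * y1*y2^+2 - (int_of_Z (Zpos 1412%positive))%:~R * y2^+3.
Definition r35 (y0 y1 y2 : R) : R := (int_of_Z (Zpos 16329%positive))%:~R * y0*y1^+2 + 880%:R * y0*y1*y2 + 961%:R * y0*y2^+2 - (int_of_Z (Zpos 4486%positive))%:~R * y1^+3 - (int_of_Z (Zpos 5729%positive))%:~R * y1^+2*y2 - (int_of_Z (Zpos 5051%positive))%:~R * y1*y2^+2 - (int_of_Z (Zpos 2904%positive))%:~R * y2^+3.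
Definition r36 (y0 y1 y2 : R) : R := (int_of_Z (Zpos 238036%positive))%:~R * y0*y1*y2 + (int_of_Z (Zpos 11968%positive))%:~R * y0*y2^+2 - (int_of_Z (Zpos 127861%positive))%:~R * y1^+3 + (int_of_Z (Zpos 3739%positive))%:~R * y1^+2*y2 + (int_of_Z (Zpos 3211%positive))%:~R * y1*y2^+2 - (int_of_Z (Zpos 129093%positive))%:~R * y2^+3.
Definition r37 (y0 y1 y2 : R) : R := (int_of_Z (Zpos 854760%positive))%:~R * y0*y2^+2 - (int_of_Z (Zpos 115601%positive))%:~R * y1^+3 - (int_of_Z (Zpos 248929%positive))%:~R * y1^+2*y2 - (int_of_Z (Zpos 286639%positive))%:~R * y1*y2^+2 - (int_of_Z (Zpos 203591%positive))%:~R * y2^+3.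
Definition r38 (y0 y1 y2 : R) : R := (int_of_Z (Zpos 9875281%positive))%:~R * y1^+3 - (int_of_Z (Zpos 5404551%positive))%:~R * y1^+2*y2 - (int_of_Z (Zpos 5123821%positive))%:~R * y1*y2^+2 + (int_of_Z (Zpos 653091%positive))%:~R * y2^+3.
Definition r39 (y0 y1 y2 : R) : R := (int_of_Z (Zpos 241501237%positive))%:~R * y1^+2*y2 - (int_of_Z (Zpos 76298694%positive))%:~R * y1*y2^+2 - (int_of_Z (Zpos 165202543%positive))%:~R * y2^+3.
Definition r40 (y0 y1 y2 : R) : R := 1%:R * y1*y2^+2 - 1%:R * y2^+3.
End RS.
Lemma key (R : comRingType) (y0 y1 y2 : R) :
  (int_of_Z (Zpos 981578361084234406647221018548568805655522423417191059836663476551653303308914616269688768811944181329741809067715208860218834139882194025085951936580275214751641574364939892904549730108843003667696289928906713781349600%positive))%:~R * (42 * hx4 y0 y1 y2 ^+ 2 - 25 * (hx5 y0 y1 y2 * hx2 y0 y1 y2 * hx1 y0 y1 y2)) =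
  (int_of_Z (Zpos 3608743974574391200908900803487385314910008909622025955281851016734019497459244912756208708867441843124050768631305914927275125514272772151051293884486305936586917552812279018031432831282511042895942242385686447725550%positive))%:~R * (r0 y0 y1 y2 ^+ 2) + 
  (int_of_Z (Zpos 18553953596783502318297690506361878225758400563609387944893835561614496130895860733965083336079392509635222460829336323533548203158214766843451382439518282450318342173842051506588343605565609475043404845170624409900%positive))%:~R * (r1 y0 y1 y2 ^+ 2) + 
  (int_of_Z (Zpos 11935414959901598343022694161582923897449305996948559997850501553238976585508367672358058679129287193544434927691327714082957560589156962059207382656821084559556961325739390608544361497506919479159113117943792900%positive))%:~R * (r2 y0 y1 y2 ^+ 2) + 
  (int_of_Z (Zpos 4408332555244142248485885961565960964954371039765923786099040994447386824874261562849719769105934508096987657547972455602111990011294472908113147859361999814218753894348445360784978756136216332811123450092450%positive))%:~R * (r3 y0 y1 y2 ^+ 2) + 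
  (int_of_Z (Zpos 2982136858762127889833355700992165422333169671954055038000795133056304316047776092018050358973313211429168993867324393046053406611806629926495871406890749905559116893057491905975330109076025225233239253550%positive))%:~R * (r4 y0 y1 y2 ^+ 2) + 
  (int_of_Z (Zpos 2348873365028694287084744348720083737981362389530504075833364654100744561299852593012683233507560855894191094218392963490827967255504698679767317722466812343452997185122313210430065530046951381663380450%positive))%:~R * (r5 y0 y1 y2 ^+ 2) + 
  (int_of_Z (Zpos 180355275327598868574825687637559037453434625787582281642611032450868506193515176709813507174109377715107803742938539341871239521009678966143126336928635723590544124325636957983840706687571831838900%positive))%:~R * (r6 y0 y1 y2 ^+ 2) + 
  (int_of_Z (Zpos 607078372614023711843213639006953867564822997725278314424781047983805240827898615351664216019808780127450816582182804456286723438632318112299423127599769704592605021407206914615396437910610053675%positive))%:~R * (r7 y0 y1 y2 ^+ 2) + 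
  (int_of_Z (Zpos 2236730527647050333999911487182822184223507546683198525056433680504766618032052747306184174047507833875272781405123149962965231646276195270275023548407411347520831678713819373098070846221266725%positive))%:~R * (r8 y0 y1 y2 ^+ 2) + 
  (int_of_Z (Zpos 67512140731040174864253126184063661080171822502899700879294794406180982403668817868343076032959913483369127437035381847202975828438013902902099405645249096129910817422247411095241318871887100%positive))%:~R * (r9 y0 y1 y2 ^+ 2) + 
  (int_of_Z (Zpos 2607894310798231203267665365275046833410810220729954477993446852197447603092386773512464454728980048611297135647931904866635036319160895878915924616765674311962169323495263020144675844905900%positive))%:~R * (r10 y0 y1 y2 ^+ 2) + 
  (int_of_Z (Zpos 5252678689788284818179329414665201667836377112121467830239293155143865720207229017652311444747889971451569579797837425210331532798287924085368977427682245074844147213701019908357720836900%positive))%:~R * (r11 y0 y1 y2 ^+ 2) + 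
  (int_of_Z (Zpos 3644145260311512912473402057269990002923962596705271252920839076712522130588950704607454401265436682935360089894708222625946842784019695143654116597988003254000696105558752335956644195200%positive))%:~R * (r12 y0 y1 y2 ^+ 2) + 
  (int_of_Z (Zpos 4492209062828314963043173961304484121392193491124319264500089113077195693140496678537993042327958906862389131389569865734765161948668006114862458232654760925537634992340386537607086830469581671497318381835505359015355000%positive))%:~R * (r13 y0 y1 y2 ^+ 2) + 
  (int_of_Z (Zpos 22308599115550781969255023148831109219443691441299796814469624467083029620657150369765653836635095030221404751538982019550428048633686227842862544013188073062537308508294088475103402957019159174265824771111516222303400%positive))%:~R * (y0 * y1 * r14 y0 y1 y2 ^+ 2) + 
  (int_of_Z (Zpos 227638766485212060910765542335011318565751953482650987902751270072275812455685207854751569761582602349198007668765122648473755598302920692274107591971306867985074576615245800766361254663460807900671681337872614513300%positive))%:~R * (y0 * y1 * r15 y0 y1 y2 ^+ 2) + 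
  (int_of_Z (Zpos 4262172649084821565988801643719360858252377001377295092647257822629844999170276232174071944472184895048813760606666126184189466521416387429813078317760639230358843136625878822859529874549904488353001693134636186632%positive))%:~R * (y0 * y1 * r16 y0 y1 y2 ^+ 2) + 
  (int_of_Z (Zpos 6147243768916119877949351873263339084428282600444088407008760620146653469104124782967255115062608461099425274319380708277661854934638340615201060739691273393994917104099254203806350852208904454267883762983374732%positive))%:~R * (y0 * y1 * r17 y0 y1 y2 ^+ 2) + 
  (int_of_Z (Zpos 38420375737576115131106670236274157240860917478619910575481816327555753213159325530049413749497019629264038985876411012934889079748616619846655157961256525884079625729412172316801173680490973293890480674179800%positive))%:~R * (y0 * y1 * r18 y0 y1 y2 ^+ 2) + 
  (int_of_Z (Zpos 64856788465723074639878314049805469366563313871002744533377192220586026288060248954147618519118296541790539783448218507016318348778005541878973687615267757015091048097751270051813284441213889817105040788200%positive))%:~R * (y0 * y1 * r19 y0 y1 y2 ^+ 2) + 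
  (int_of_Z (Zpos 326211486447920623496981477136150430501480931450481548370317770833242624877987872102341676190486362060751877694605206433797216985944460971545737831282811512472694971928788844658828043048551385717186214800%positive))%:~R * (y0 * y1 * r20 y0 y1 y2 ^+ 2) + 
  (int_of_Z (Zpos 3002269847016104443927711269292058624642174687099675726690229328174516023925115221308964554449883371833032219271600568094550388457595030155874995248578705688970929450815937311347670689056504644395005200%positive))%:~R * (y0 * y1 * r21 y0 y1 y2 ^+ 2) + 
  (int_of_Z (Zpos 3561737072941293669810629548445616143769668004505862400958855227176038836912877869409675804346647767843218087873800233936440818126344817194194842926365071604181232919518581903400538613388442534452930001952888425152660800%positive))%:~R * (y0 * y1 * r22 y0 y1 y2 ^+ 2) + 
  (int_of_Z (Zpos 22308599115550781969255023148831109219443691441299796814469624467083029620657150369765653836635095030221404751538982019550428048633686227842862544013188073062537308508294088475103402957019159174265824771111516222303400%positive))%:~R * (y0 * y2 * r23 y0 y1 y2 ^+ 2) + 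
  (int_of_Z (Zpos 73625739655283108809422518643006961120276209377227052192969057647138711619330529273153973058201633763106946374716112275743986959187083260207467141957716412747647882865657057673608590617224947769854207165384541987800%positive))%:~R * (y0 * y2 * r24 y0 y1 y2 ^+ 2) + 
  (int_of_Z (Zpos 344631121790686892299424555350245349924697150276381946435174312390862054388355668938167533463922541018798472392288185120503768745131028026503037685759523634137926260222224525280721062463606138497189905880523388028%positive))%:~R * (y0 * y2 * r25 y0 y1 y2 ^+ 2) + 
  (int_of_Z (Zpos 1562917843871374259002374392275819691185596164425242539174379486842847985866100424891334959357737714646789354390063611744909552478929272627039953583660899243317792298614551526799552211792206007283740312241608468%positive))%:~R * (y0 * y2 * r26 y0 y1 y2 ^+ 2) + 
  (int_of_Z (Zpos 10342157501165697809296420994998166256125921267574172509457098068705498245834566899286431350631052824831028759010035599471573300610004915527902501507465800201886361087825024287921752737939243067392184464668400%positive))%:~R * (y0 * y2 * r27 y0 y1 y2 ^+ 2) + 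
  (int_of_Z (Zpos 68667188364755917382061180213166579637738489085637021865815038802898972919511806221334594120171260132194143818853833436119635470004128874386893494069579444886140938133879923770322914660817187170893501564400%positive))%:~R * (y0 * y2 * r28 y0 y1 y2 ^+ 2) + 
  (int_of_Z (Zpos 534676467388726019967057772957573142278833728750436817150903841881922090277193880958537111838331843071830051637373854084028046817989356120730552489313400493389261388502753730423538456824410560445892134800%positive))%:~R * (y0 * y2 * r29 y0 y1 y2 ^+ 2) + 
  (int_of_Z (Zpos 5545745006760671744127514051886412637286887901222452352408492920174867179933876019914061618801378296046247017153018360471285620550888743156856489705206486463479527248820861335104568984983272832620288400%positive))%:~R * (y0 * y2 * r30 y0 y1 y2 ^+ 2) + 
  (int_of_Z (Zpos 4014026250409396332699369687630517827492245393369129433223142725852248095011688036395924455746053982868284580432061356101262174177862033317062127582055566483323917282367826665399679907264767473001619837809339547378593600%positive))%:~R * (y0 * y2 * r31 y0 y1 y2 ^+ 2) + 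
  (int_of_Z (Zpos 40899098378509766943634209106190366902313434309049627493194311522985554304538109011237032033831007555405908711154800369175784755828424751045247997357511467281318398931872495537689572087868458486154012080371113074222900%positive))%:~R * (y1 * y2 * r32 y0 y1 y2 ^+ 2) + 
  (int_of_Z (Zpos 201473391027141709081941916779262891144401154231771564005883307995002730564227137986389320363699544607910880350516257976235392885854309118449497523928627917641962556314642835161032374817086002394847350149611394454300%positive))%:~R * (y1 * y2 * r33 y0 y1 y2 ^+ 2) + 
  (int_of_Z (Zpos 713180145228820209139617404528364216440358068077067483206666576973460993147706683137661311021945290647472142833685868942426169507448881835219460261694258115546770110848293221808964158644552220866716283715438564440%positive))%:~R * (y1 * y2 * r34 y0 y1 y2 ^+ 2) + 
  (int_of_Z (Zpos 26598487870926052260764713047815163684988551868389619528009060283963362412086065896921779558599098659091832628190011279682622158738218448015717514812407568887744687213338880034396421863833198757292560278198425240%positive))%:~R * (y1 * y2 * r35 y0 y1 y2 ^+ 2) + 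
  (int_of_Z (Zpos 126267838873726827264212664235792632055811152982239115371835512783270595731978585018743429150283912873572782561691142289575371117705669924959925354727942634068592551341280035115982274555661809960428645727386700%positive))%:~R * (y1 * y2 * r36 y0 y1 y2 ^+ 2) + 
  (int_of_Z (Zpos 9648685202719291321060080463785192984413591263264460269112743171126517655049269103706591111399625688205203642893231608622192124016172418946467411284349175308652944783807205266549087749634525222723755702571470%positive))%:~R * (y1 * y2 * r37 y0 y1 y2 ^+ 2) + 
  (int_of_Z (Zpos 58143520951821250172523123981929531859343385012092796767467197477273602557165406745638481623791801476778581144671561224181674537471734169294557712142098546202647609839110702592368729851130409502176999125830%positive))%:~R * (y1 * y2 * r38 y0 y1 y2 ^+ 2) + 
  (int_of_Z (Zpos 68596965362926528608858796383437829833410407159303617376447450268028212379663991907284997402521627981407620449330539967353635994901535429880242739061111797883082300714506987732811068413633327581507462800%positive))%:~R * (y1 * y2 * r39 y0 y1 y2 ^+ 2) + 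
  (int_of_Z (Zpos 3773284478975949634431513773789965027080130162009814494334415410834734200847607182111568959577467902924286706484435470297083637458878713865077871145327381646595012481243838411297235329927027381129045853479096567683267200%positive))%:~R * (y1 * y2 * r40 y0 y1 y2 ^+ 2).
Proof.
rewrite /hx4 /hx5 /hx2 /hx1 /r0 /r1 /r2 /r3 /r4 /r5 /r6 /r7 /r8 /r9 /r10 /r11 /r12 /r13 /r14 /r15 /r16 /r17 /r18 /r19 /r20 /r21 /r22 /r23 /r24 /r25 /r26 /r27 /r28 /r29 /r30 /r31 /r32 /r33 /r34 /r35 /r36 /r37 /r38 /r39 /r40.
Time ring.
Qed.


Arguments int_of_Z : simpl never.

Lemma hsum_rmorph (R S : comRingType) (f : {rmorphism R -> S}) d a b c :
  f (hsum d a b c) = hsum d (f a) (f b) (f c).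
Proof.
rewrite /hsum rmorph_sum; apply: eq_bigr => i _; rewrite rmorph_sum.
by apply: eq_bigr => j _; rewrite !rmorphM !rmorphXn.
Qed.

Lemma hpart_eval (R : comRingType) lam (x : 'I_3 -> R) :
  (hpart R 3 lam).@[x] = \prod_(k <- lam) hsum k (x 0) (x 1) (x 2).
Proof.
rewrite /hpart (rmorph_prod (meval x)); apply: eq_bigr => k _.
by rewrite hcompE (hsum_rmorph (meval x)) /= !mevalXU.
Qed.

Lemma Hnorm_eval (R : fieldType) lam (x : 'I_3 -> R) :
  (Hnorm R 3 lam).@[x] =
  (\prod_(k <- lam) hsum k 1 1 1)^-1 * \prod_(k <- lam) hsum k (x 0) (x 1) (x 2).
Proof. by rewrite /Hnorm mevalZ !hpart_eval. Qed.

Lemma hpart_sq (R : comRingType) lam :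
  sqsubst (hpart R 3 lam) = \prod_(k <- lam) hsum k ('X_0 ^+ 2) ('X_1 ^+ 2) ('X_2 ^+ 2).
Proof.
rewrite /sqsubst /hpart (rmorph_prod (comp_mpoly _)); apply: eq_bigr => k _.
by rewrite hcompE (hsum_rmorph (comp_mpoly _)) /= !comp_mpolyXU -!tnth_nth !tnth_mktuple.
Qed.

Lemma Hnorm_sq (R : fieldType) lam :
  sqsubst (Hnorm R 3 lam) =
  (\prod_(k <- lam) hsum k 1 1 1)^-1 *: \prod_(k <- lam) hsum k ('X_0 ^+ 2) ('X_1 ^+ 2) ('X_2 ^+ 2).
Proof. by rewrite /Hnorm {1}/sqsubst comp_mpolyZ -/(sqsubst _) hpart_sq hpart_eval. Qed.

Lemma zc_gt0 (R : numDomainType) p : 0 < (int_of_Z (Zpos p))%:~R :> R.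
Proof.
have -> : int_of_Z (Zpos p) = Posz (Pos.to_nat p) by [].
by rewrite ltr0z ltz_nat; apply/ssrnat.ltP; apply: Pos2Nat.is_pos.
Qed.

Lemma zc_ge0 (R : numDomainType) p : 0 <= (int_of_Z (Zpos p))%:~R :> R.
Proof. exact/ltW/zc_gt0. Qed.


Notation zM := ((int_of_Z (Zpos 981578361084234406647221018548568805655522423417191059836663476551653303308914616269688768811944181329741809067715208860218834139882194025085951936580275214751641574364939892904549730108843003667696289928906713781349600%positive))%:~R) (only parsing).
Notation zD := ((int_of_Z (Zpos 9275915512246015142816238625283975213444686901292455515456469853413123716269243123748558865272872513566060095689908723729067982621886733537062245800683600779403012877748681987947994949528566384659729939828168445233753720000%positive))%:~R) (only parsing).

Ltac pos hx := repeat first [ apply: sqr_ge0 | apply: ler0n | apply: zc_ge0 | apply: hx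
                         | apply: addr_ge0 | apply: mulr_ge0 | rewrite invr_ge0 ].

Lemma part2 (R : realFieldType) (x : 'I_3 -> R) :
  (forall i, 0 <= x i) -> 0 <= (Hnorm R 3 [:: 4; 4]%N - Hnorm R 3 [:: 5; 2; 1]%N).@[x].
Proof.
move=> hx; rewrite mevalB !Hnorm_eval !big_cons !big_nil !mulr1 !hsum4 !hsum5 !hsum2 !hsum1.
have e4 : hx4 1 1 1 = 15 :> R by rewrite /hx4; ring.
have e5 : hx5 1 1 1 = 21 :> R by rewrite /hx5; ring.
have e2 : hx2 1 1 1 = 6 :> R by rewrite /hx2; ring.
have e1 : hx1 1 1 1 = 3 :> R by rewrite /hx1; ring.
rewrite e4 e5 e2 e1.
have P : 0 <= zD^-1 * (zM * (42 * hx4 (x 0) (x 1) (x 2) ^+ 2 - 25 * (hx5 (x 0) (x 1) (x 2) * hx2 (x 0) (x 1) (x 2) * hx1 (x 0) (x 1) (x 2)))).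
  rewrite key; pos hx.
apply: le_trans P _; rewrite le_eqVlt; apply/orP; left; apply/eqP.
by field.
Qed.


Definition rawg (V : comRingType) (x0 x1 x2 : V) : seq (positive * V) := [::
  (3608743974574391200908900803487385314910008909622025955281851016734019497459244912756208708867441843124050768631305914927275125514272772151051293884486305936586917552812279018031432831282511042895942242385686447725550%positive, r0 (x0 ^+ 2) (x1 ^+ 2) (x2 ^+ 2));
  (18553953596783502318297690506361878225758400563609387944893835561614496130895860733965083336079392509635222460829336323533548203158214766843451382439518282450318342173842051506588343605565609475043404845170624409900%positive, r1 (x0 ^+ 2) (x1 ^+ 2) (x2 ^+ 2));
  (11935414959901598343022694161582923897449305996948559997850501553238976585508367672358058679129287193544434927691327714082957560589156962059207382656821084559556961325739390608544361497506919479159113117943792900%positive, r2 (x0 ^+ 2) (x1 ^+ 2) (x2 ^+ 2));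
  (4408332555244142248485885961565960964954371039765923786099040994447386824874261562849719769105934508096987657547972455602111990011294472908113147859361999814218753894348445360784978756136216332811123450092450%positive, r3 (x0 ^+ 2) (x1 ^+ 2) (x2 ^+ 2));
  (2982136858762127889833355700992165422333169671954055038000795133056304316047776092018050358973313211429168993867324393046053406611806629926495871406890749905559116893057491905975330109076025225233239253550%positive, r4 (x0 ^+ 2) (x1 ^+ 2) (x2 ^+ 2));
  (2348873365028694287084744348720083737981362389530504075833364654100744561299852593012683233507560855894191094218392963490827967255504698679767317722466812343452997185122313210430065530046951381663380450%positive, r5 (x0 ^+ 2) (x1 ^+ 2) (x2 ^+ 2));
  (180355275327598868574825687637559037453434625787582281642611032450868506193515176709813507174109377715107803742938539341871239521009678966143126336928635723590544124325636957983840706687571831838900%positive, r6 (x0 ^+ 2) (x1 ^+ 2) (x2 ^+ 2));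
  (607078372614023711843213639006953867564822997725278314424781047983805240827898615351664216019808780127450816582182804456286723438632318112299423127599769704592605021407206914615396437910610053675%positive, r7 (x0 ^+ 2) (x1 ^+ 2) (x2 ^+ 2));
  (2236730527647050333999911487182822184223507546683198525056433680504766618032052747306184174047507833875272781405123149962965231646276195270275023548407411347520831678713819373098070846221266725%positive, r8 (x0 ^+ 2) (x1 ^+ 2) (x2 ^+ 2));
  (67512140731040174864253126184063661080171822502899700879294794406180982403668817868343076032959913483369127437035381847202975828438013902902099405645249096129910817422247411095241318871887100%positive, r9 (x0 ^+ 2) (x1 ^+ 2) (x2 ^+ 2));
  (2607894310798231203267665365275046833410810220729954477993446852197447603092386773512464454728980048611297135647931904866635036319160895878915924616765674311962169323495263020144675844905900%positive, r10 (x0 ^+ 2) (x1 ^+ 2) (x2 ^+ 2));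
  (5252678689788284818179329414665201667836377112121467830239293155143865720207229017652311444747889971451569579797837425210331532798287924085368977427682245074844147213701019908357720836900%positive, r11 (x0 ^+ 2) (x1 ^+ 2) (x2 ^+ 2));
  (3644145260311512912473402057269990002923962596705271252920839076712522130588950704607454401265436682935360089894708222625946842784019695143654116597988003254000696105558752335956644195200%positive, r12 (x0 ^+ 2) (x1 ^+ 2) (x2 ^+ 2));
  (4492209062828314963043173961304484121392193491124319264500089113077195693140496678537993042327958906862389131389569865734765161948668006114862458232654760925537634992340386537607086830469581671497318381835505359015355000%positive, r13 (x0 ^+ 2) (x1 ^+ 2) (x2 ^+ 2));
  (22308599115550781969255023148831109219443691441299796814469624467083029620657150369765653836635095030221404751538982019550428048633686227842862544013188073062537308508294088475103402957019159174265824771111516222303400%positive, x0 * x1 * r14 (x0 ^+ 2) (x1 ^+ 2) (x2 ^+ 2));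
  (227638766485212060910765542335011318565751953482650987902751270072275812455685207854751569761582602349198007668765122648473755598302920692274107591971306867985074576615245800766361254663460807900671681337872614513300%positive, x0 * x1 * r15 (x0 ^+ 2) (x1 ^+ 2) (x2 ^+ 2));
  (4262172649084821565988801643719360858252377001377295092647257822629844999170276232174071944472184895048813760606666126184189466521416387429813078317760639230358843136625878822859529874549904488353001693134636186632%positive, x0 * x1 * r16 (x0 ^+ 2) (x1 ^+ 2) (x2 ^+ 2));
  (6147243768916119877949351873263339084428282600444088407008760620146653469104124782967255115062608461099425274319380708277661854934638340615201060739691273393994917104099254203806350852208904454267883762983374732%positive, x0 * x1 * r17 (x0 ^+ 2) (x1 ^+ 2) (x2 ^+ 2));
  (38420375737576115131106670236274157240860917478619910575481816327555753213159325530049413749497019629264038985876411012934889079748616619846655157961256525884079625729412172316801173680490973293890480674179800%positive, x0 * x1 * r18 (x0 ^+ 2) (x1 ^+ 2) (x2 ^+ 2));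
  (64856788465723074639878314049805469366563313871002744533377192220586026288060248954147618519118296541790539783448218507016318348778005541878973687615267757015091048097751270051813284441213889817105040788200%positive, x0 * x1 * r19 (x0 ^+ 2) (x1 ^+ 2) (x2 ^+ 2));
  (326211486447920623496981477136150430501480931450481548370317770833242624877987872102341676190486362060751877694605206433797216985944460971545737831282811512472694971928788844658828043048551385717186214800%positive, x0 * x1 * r20 (x0 ^+ 2) (x1 ^+ 2) (x2 ^+ 2));
  (3002269847016104443927711269292058624642174687099675726690229328174516023925115221308964554449883371833032219271600568094550388457595030155874995248578705688970929450815937311347670689056504644395005200%positive, x0 * x1 * r21 (x0 ^+ 2) (x1 ^+ 2) (x2 ^+ 2));
  (3561737072941293669810629548445616143769668004505862400958855227176038836912877869409675804346647767843218087873800233936440818126344817194194842926365071604181232919518581903400538613388442534452930001952888425152660800%positive, x0 * x1 * r22 (x0 ^+ 2) (x1 ^+ 2) (x2 ^+ 2));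
  (22308599115550781969255023148831109219443691441299796814469624467083029620657150369765653836635095030221404751538982019550428048633686227842862544013188073062537308508294088475103402957019159174265824771111516222303400%positive, x0 * x2 * r23 (x0 ^+ 2) (x1 ^+ 2) (x2 ^+ 2));
  (73625739655283108809422518643006961120276209377227052192969057647138711619330529273153973058201633763106946374716112275743986959187083260207467141957716412747647882865657057673608590617224947769854207165384541987800%positive, x0 * x2 * r24 (x0 ^+ 2) (x1 ^+ 2) (x2 ^+ 2));
  (344631121790686892299424555350245349924697150276381946435174312390862054388355668938167533463922541018798472392288185120503768745131028026503037685759523634137926260222224525280721062463606138497189905880523388028%positive, x0 * x2 * r25 (x0 ^+ 2) (x1 ^+ 2) (x2 ^+ 2));
  (1562917843871374259002374392275819691185596164425242539174379486842847985866100424891334959357737714646789354390063611744909552478929272627039953583660899243317792298614551526799552211792206007283740312241608468%positive, x0 * x2 * r26 (x0 ^+ 2) (x1 ^+ 2) (x2 ^+ 2));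
  (10342157501165697809296420994998166256125921267574172509457098068705498245834566899286431350631052824831028759010035599471573300610004915527902501507465800201886361087825024287921752737939243067392184464668400%positive, x0 * x2 * r27 (x0 ^+ 2) (x1 ^+ 2) (x2 ^+ 2));
  (68667188364755917382061180213166579637738489085637021865815038802898972919511806221334594120171260132194143818853833436119635470004128874386893494069579444886140938133879923770322914660817187170893501564400%positive, x0 * x2 * r28 (x0 ^+ 2) (x1 ^+ 2) (x2 ^+ 2));
  (534676467388726019967057772957573142278833728750436817150903841881922090277193880958537111838331843071830051637373854084028046817989356120730552489313400493389261388502753730423538456824410560445892134800%positive, x0 * x2 * r29 (x0 ^+ 2) (x1 ^+ 2) (x2 ^+ 2));
  (5545745006760671744127514051886412637286887901222452352408492920174867179933876019914061618801378296046247017153018360471285620550888743156856489705206486463479527248820861335104568984983272832620288400%positive, x0 * x2 * r30 (x0 ^+ 2) (x1 ^+ 2) (x2 ^+ 2));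
  (4014026250409396332699369687630517827492245393369129433223142725852248095011688036395924455746053982868284580432061356101262174177862033317062127582055566483323917282367826665399679907264767473001619837809339547378593600%positive, x0 * x2 * r31 (x0 ^+ 2) (x1 ^+ 2) (x2 ^+ 2));
  (40899098378509766943634209106190366902313434309049627493194311522985554304538109011237032033831007555405908711154800369175784755828424751045247997357511467281318398931872495537689572087868458486154012080371113074222900%positive, x1 * x2 * r32 (x0 ^+ 2) (x1 ^+ 2) (x2 ^+ 2));
  (201473391027141709081941916779262891144401154231771564005883307995002730564227137986389320363699544607910880350516257976235392885854309118449497523928627917641962556314642835161032374817086002394847350149611394454300%positive, x1 * x2 * r33 (x0 ^+ 2) (x1 ^+ 2) (x2 ^+ 2));
  (713180145228820209139617404528364216440358068077067483206666576973460993147706683137661311021945290647472142833685868942426169507448881835219460261694258115546770110848293221808964158644552220866716283715438564440%positive, x1 * x2 * r34 (x0 ^+ 2) (x1 ^+ 2) (x2 ^+ 2));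
  (26598487870926052260764713047815163684988551868389619528009060283963362412086065896921779558599098659091832628190011279682622158738218448015717514812407568887744687213338880034396421863833198757292560278198425240%positive, x1 * x2 * r35 (x0 ^+ 2) (x1 ^+ 2) (x2 ^+ 2));
  (126267838873726827264212664235792632055811152982239115371835512783270595731978585018743429150283912873572782561691142289575371117705669924959925354727942634068592551341280035115982274555661809960428645727386700%positive, x1 * x2 * r36 (x0 ^+ 2) (x1 ^+ 2) (x2 ^+ 2));
  (9648685202719291321060080463785192984413591263264460269112743171126517655049269103706591111399625688205203642893231608622192124016172418946467411284349175308652944783807205266549087749634525222723755702571470%positive, x1 * x2 * r37 (x0 ^+ 2) (x1 ^+ 2) (x2 ^+ 2));
  (58143520951821250172523123981929531859343385012092796767467197477273602557165406745638481623791801476778581144671561224181674537471734169294557712142098546202647609839110702592368729851130409502176999125830%positive, x1 * x2 * r38 (x0 ^+ 2) (x1 ^+ 2) (x2 ^+ 2));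
  (68596965362926528608858796383437829833410407159303617376447450268028212379663991907284997402521627981407620449330539967353635994901535429880242739061111797883082300714506987732811068413633327581507462800%positive, x1 * x2 * r39 (x0 ^+ 2) (x1 ^+ 2) (x2 ^+ 2));
  (3773284478975949634431513773789965027080130162009814494334415410834734200847607182111568959577467902924286706484435470297083637458878713865077871145327381646595012481243838411297235329927027381129045853479096567683267200%positive, x1 * x2 * r40 (x0 ^+ 2) (x1 ^+ 2) (x2 ^+ 2))].

Definition cf_def (F : numFieldType) (c : positive) : F := zD^-1 * (int_of_Z (Zpos c))%:~R.
Fact cf_key : unit. Proof. exact: tt. Qed.
Definition cfg := locked_with cf_key cf_def.
Lemma cfE (F : numFieldType) c : cfg F c = zD^-1 * (int_of_Z (Zpos c))%:~R.
Proof. by rewrite /cfg unlock. Qed.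

Lemma cf_gt0 (F : numFieldType) c : 0 < cfg F c.
Proof. by rewrite cfE; apply: mulr_gt0; [rewrite invr_gt0; apply: zc_gt0 | apply: zc_gt0]. Qed.

Lemma all_cf (F : numFieldType) (T : Type) (l : seq (positive * T)) :
  all (fun dq => 0 < dq.1) [seq (cfg F t.1, t.2) | t <- l].
Proof. by elim: l => //= t l ->; rewrite cf_gt0. Qed.

Lemma c1gen (F : numFieldType) : (15 * 15 : F)^-1 = zD^-1 * (int_of_Z (Zpos 41226291165537845079183282779039889837531941783522024513139866015169438738974413883326928290101655615849155980844038772129191033875052149053609981336371559019568946123327475501991088664571406154043244177014081978816683200%positive))%:~R.
Proof. by field. Qed.
Lemma c2gen (F : numFieldType) : (21 * (6 * 3) : F)^-1 = zD^-1 * (int_of_Z (Zpos 24539459027105860166180525463714220141388060585429776495916586913791332582722865406742219220298604533243545226692880221505470853497054850627148798414506880368791039359123497322613743252721075091692407248222667844533740000%positive))%:~R.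
Proof. by field. Qed.

Lemma algMz (F : numFieldType) (V : comAlgType F) (a : F) p :
  (a * (int_of_Z (Zpos p))%:~R)%:A = a%:A * (int_of_Z (Zpos p))%:~R :> V.
Proof. rewrite -(rmorph_int (in_alg V)); exact: (rmorphM (in_alg V)). Qed.
Lemma algz (F : numFieldType) (V : comAlgType F) (n : int) : (n%:~R : F)%:A = n%:~R :> V.
Proof. exact: (rmorph_int (in_alg V)). Qed.

Lemma comb (F : numFieldType) (V : lmodType F) (a b c : F) (P Q : V) :
  (a * b) *: P - (a * c) *: Q = a *: (b *: P - c *: Q).
Proof. by rewrite scalerBr !scalerA. Qed.
Lemma comb2 (F : numFieldType) (V : comAlgType F) (b c : int) (P Q : V) :
  (b%:~R : F) *: P - (c%:~R : F) *: Q = b%:~R * P - c%:~R * Q.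
Proof. by rewrite !scaler_int !mulrzl. Qed.

Lemma part1_gen (F : numFieldType) (V : comAlgType F) (x0 x1 x2 : V) :
  (15 * 15 : F)^-1 *: (hx4 (x0 ^+ 2) (x1 ^+ 2) (x2 ^+ 2) * hx4 (x0 ^+ 2) (x1 ^+ 2) (x2 ^+ 2)) -
  (21 * (6 * 3) : F)^-1 *: (hx5 (x0 ^+ 2) (x1 ^+ 2) (x2 ^+ 2) * (hx2 (x0 ^+ 2) (x1 ^+ 2) (x2 ^+ 2) * hx1 (x0 ^+ 2) (x1 ^+ 2) (x2 ^+ 2))) =
  \sum_(t <- rawg x0 x1 x2) cfg F t.1 *: t.2 ^+ 2.
Proof.
rewrite c1gen c2gen comb.
rewrite (eq_bigr (fun t => zD^-1 *: ((int_of_Z (Zpos t.1))%:~R * t.2 ^+ 2))); last first.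
  by move=> t _; rewrite cfE -scalerA scaler_int mulrzl.
rewrite -scaler_sumr; congr (_ *: _).
rewrite comb2.
Time rewrite /rawg !big_cons big_nil /=.
apply: (@eq_trans _ _ (zM * (42 * hx4 (x0 ^+ 2) (x1 ^+ 2) (x2 ^+ 2) ^+ 2 - 25 * (hx5 (x0 ^+ 2) (x1 ^+ 2) (x2 ^+ 2) * hx2 (x0 ^+ 2) (x1 ^+ 2) (x2 ^+ 2) * hx1 (x0 ^+ 2) (x1 ^+ 2) (x2 ^+ 2))))).
  Time ring.
apply: (eq_trans (key (x0 ^+ 2) (x1 ^+ 2) (x2 ^+ 2)) _).
Time ring.
Qed.


From mathcomp Require Import lra.
Definition pt (R : numDomainType) (a b c : nat) : 'I_3 -> R := fun i => (nth 0%N [:: a; b; c] i)%:R.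

Lemma cross (R : realFieldType) (A B C D : R) : 0 < A -> 0 < C -> B * C < D * A -> A^-1 * B - C^-1 * D < 0.
Proof.
move=> hA hC h.
have -> : A^-1 * B - C^-1 * D = (B * C - D * A) / (A * C).
  by field; apply/andP; split; apply: lt0r_neq0.
by rewrite pmulr_llt0 ?invr_gt0 ?mulr_gt0 // subr_lt0.
Qed.
Definition plist : seq (seq nat) := [:: [::]; [:: 1]%N; [:: 2]%N; [:: 1; 1]%N; [:: 3]%N; [:: 2; 1]%N; [:: 1; 1; 1]%N; [:: 4]%N; [:: 3; 1]%N; [:: 2; 2]%N; [:: 2; 1; 1]%N; [:: 1; 1; 1; 1]%N; [:: 5]%N; [:: 4; 1]%N; [:: 3; 2]%N; [:: 3; 1; 1]%N; [:: 2; 2; 1]%N; [:: 2; 1; 1; 1]%N; [:: 1; 1; 1; 1; 1]%N; [:: 6]%N; [:: 5; 1]%N; [:: 4; 2]%N; [:: 4; 1; 1]%N; [:: 3; 3]%N; [:: 3; 2; 1]%N; [:: 3; 1; 1; 1]%N; [:: 2; 2; 2]%N; [:: 2; 2; 1; 1]%N; [:: 2; 1; 1; 1; 1]%N; [:: 1; 1; 1; 1; 1; 1]%N; [:: 7]%N; [:: 6; 1]%N; [:: 5; 2]%N; [:: 5; 1; 1]%N; [:: 4; 3]%N; [:: 4; 2; 1]%N; [:: 4; 1; 1; 1]%N; [:: 3; 3; 1]%N; [:: 3; 2; 2]%N; [:: 3; 2; 1; 1]%N; [:: 3; 1; 1; 1; 1]%N; [:: 2; 2; 2; 1]%N; [::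 2; 2; 1; 1; 1]%N; [:: 2; 1; 1; 1; 1; 1]%N; [:: 1; 1; 1; 1; 1; 1; 1]%N].
Lemma sum_step a l n : (sumn (a :: l) <= n)%N -> ((a <= n) && (sumn l <= n - a))%N.
Proof. rewrite /=; move=> h; apply/andP; split; lia. Qed.

Ltac enum :=
  let a := fresh "a" in let l := fresh "l" in
  let H1 := fresh "H" in let H2 := fresh "H" in let H3 := fresh "H" in
  let H4 := fresh "H" in let H5 := fresh "H" in let H6 := fresh "H" in
  case=> [|a l];
  [ by []
  | move=> /andP[H1 H2] /andP[H3 H4] /sum_step/andP[H5 H6];
    move: H2 H4 H6; move: l;
    case: a H1 H3 H5 => [|[|[|[|[|[|[|[|a]]]]]]]] H1 H3 H5; try by []; enum ].

Lemma enum_aux l : path geq 7%N l -> all (fun k => 0 < k)%N l -> (sumn l <= 7)%N -> l \in plist.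
Proof. move: l. Time enum. Qed.

Lemma enum_part l : is_partition l -> (sumn l <= 7)%N -> l \in plist.
Proof.
case/andP=> Hs Hp Hsum; apply: enum_aux => //.
case: l Hs Hp Hsum => //= a l -> _ Hsum; rewrite andbT; lia.
Qed.
Definition badlist : seq (seq nat * seq nat) := [:: ([:: 4; 1; 1]%N, [:: 3; 3]%N); ([:: 3; 3]%N, [:: 4; 1; 1]%N); ([:: 3; 1; 1; 1]%N, [:: 2; 2; 2]%N); ([:: 2; 2; 2]%N, [:: 3; 1; 1; 1]%N); ([:: 5; 1; 1]%N, [:: 4; 3]%N); ([:: 4; 3]%N, [:: 5; 1; 1]%N); ([:: 4; 1; 1; 1]%N, [:: 3; 3; 1]%N); ([:: 4; 1; 1; 1]%N, [:: 3; 2; 2]%N); ([:: 3; 3; 1]%N, [:: 4; 1; 1; 1]%N); ([:: 3; 2; 2]%N, [:: 4; 1; 1; 1]%N); ([:: 3; 1; 1; 1; 1]%N, [:: 2; 2; 2; 1]%N); ([:: 2; 2; 2; 1]%N, [:: 3; 1; 1; 1; 1]%N)].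
Lemma wit0 (R : realFieldType) : exists x : 'I_3 -> R, (forall i, 0 <= x i) /\
  (Hnorm R 3 [:: 3; 3]%N - Hnorm R 3 [:: 4; 1; 1]%N).@[x] < 0.
Proof.
exists (pt R 2 2 3); split; first by move=> i; apply: ler0n.
rewrite mevalB !Hnorm_eval !big_cons !big_nil /= !mulr1 ?hsum1 ?hsum2 ?hsum3 ?hsum4 ?hsum5 /pt /=.
cbv [hx1 hx2 hx3 hx4 hx5].
apply: cross; lra.
Qed.
Lemma wit1 (R : realFieldType) : exists x : 'I_3 -> R, (forall i, 0 <= x i) /\
  (Hnorm R 3 [:: 4; 1; 1]%N - Hnorm R 3 [:: 3; 3]%N).@[x] < 0.
Proof.
exists (pt R 0 0 1); split; first by move=> i; apply: ler0n.
rewrite mevalB !Hnorm_eval !big_cons !big_nil /= !mulr1 ?hsum1 ?hsum2 ?hsum3 ?hsum4 ?hsum5 /pt /=.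
cbv [hx1 hx2 hx3 hx4 hx5].
apply: cross; lra.
Qed.
Lemma wit2 (R : realFieldType) : exists x : 'I_3 -> R, (forall i, 0 <= x i) /\
  (Hnorm R 3 [:: 2; 2; 2]%N - Hnorm R 3 [:: 3; 1; 1; 1]%N).@[x] < 0.
Proof.
exists (pt R 1 1 2); split; first by move=> i; apply: ler0n.
rewrite mevalB !Hnorm_eval !big_cons !big_nil /= !mulr1 ?hsum1 ?hsum2 ?hsum3 ?hsum4 ?hsum5 /pt /=.
cbv [hx1 hx2 hx3 hx4 hx5].
apply: cross; lra.
Qed.
Lemma wit3 (R : realFieldType) : exists x : 'I_3 -> R, (forall i, 0 <= x i) /\
  (Hnorm R 3 [:: 3; 1; 1; 1]%N - Hnorm R 3 [:: 2; 2; 2]%N).@[x] < 0.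
Proof.
exists (pt R 0 0 1); split; first by move=> i; apply: ler0n.
rewrite mevalB !Hnorm_eval !big_cons !big_nil /= !mulr1 ?hsum1 ?hsum2 ?hsum3 ?hsum4 ?hsum5 /pt /=.
cbv [hx1 hx2 hx3 hx4 hx5].
apply: cross; lra.
Qed.
Lemma wit4 (R : realFieldType) : exists x : 'I_3 -> R, (forall i, 0 <= x i) /\
  (Hnorm R 3 [:: 4; 3]%N - Hnorm R 3 [:: 5; 1; 1]%N).@[x] < 0.
Proof.
exists (pt R 1 1 2); split; first by move=> i; apply: ler0n.
rewrite mevalB !Hnorm_eval !big_cons !big_nil /= !mulr1 ?hsum1 ?hsum2 ?hsum3 ?hsum4 ?hsum5 /pt /=.
cbv [hx1 hx2 hx3 hx4 hx5].
apply: cross; lra.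
Qed.
Lemma wit5 (R : realFieldType) : exists x : 'I_3 -> R, (forall i, 0 <= x i) /\
  (Hnorm R 3 [:: 5; 1; 1]%N - Hnorm R 3 [:: 4; 3]%N).@[x] < 0.
Proof.
exists (pt R 0 0 1); split; first by move=> i; apply: ler0n.
rewrite mevalB !Hnorm_eval !big_cons !big_nil /= !mulr1 ?hsum1 ?hsum2 ?hsum3 ?hsum4 ?hsum5 /pt /=.
cbv [hx1 hx2 hx3 hx4 hx5].
apply: cross; lra.
Qed.
Lemma wit6 (R : realFieldType) : exists x : 'I_3 -> R, (forall i, 0 <= x i) /\
  (Hnorm R 3 [:: 3; 3; 1]%N - Hnorm R 3 [:: 4; 1; 1; 1]%N).@[x] < 0.
Proof.
exists (pt R 2 2 3); split; first by move=> i; apply: ler0n.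
rewrite mevalB !Hnorm_eval !big_cons !big_nil /= !mulr1 ?hsum1 ?hsum2 ?hsum3 ?hsum4 ?hsum5 /pt /=.
cbv [hx1 hx2 hx3 hx4 hx5].
apply: cross; lra.
Qed.
Lemma wit7 (R : realFieldType) : exists x : 'I_3 -> R, (forall i, 0 <= x i) /\
  (Hnorm R 3 [:: 3; 2; 2]%N - Hnorm R 3 [:: 4; 1; 1; 1]%N).@[x] < 0.
Proof.
exists (pt R 0 1 2); split; first by move=> i; apply: ler0n.
rewrite mevalB !Hnorm_eval !big_cons !big_nil /= !mulr1 ?hsum1 ?hsum2 ?hsum3 ?hsum4 ?hsum5 /pt /=.
cbv [hx1 hx2 hx3 hx4 hx5].
apply: cross; lra.
Qed.
Lemma wit8 (R : realFieldType) : exists x : 'I_3 -> R, (forall i, 0 <= x i) /\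
  (Hnorm R 3 [:: 4; 1; 1; 1]%N - Hnorm R 3 [:: 3; 3; 1]%N).@[x] < 0.
Proof.
exists (pt R 0 0 1); split; first by move=> i; apply: ler0n.
rewrite mevalB !Hnorm_eval !big_cons !big_nil /= !mulr1 ?hsum1 ?hsum2 ?hsum3 ?hsum4 ?hsum5 /pt /=.
cbv [hx1 hx2 hx3 hx4 hx5].
apply: cross; lra.
Qed.
Lemma wit9 (R : realFieldType) : exists x : 'I_3 -> R, (forall i, 0 <= x i) /\
  (Hnorm R 3 [:: 4; 1; 1; 1]%N - Hnorm R 3 [:: 3; 2; 2]%N).@[x] < 0.
Proof.
exists (pt R 0 0 1); split; first by move=> i; apply: ler0n.
rewrite mevalB !Hnorm_eval !big_cons !big_nil /= !mulr1 ?hsum1 ?hsum2 ?hsum3 ?hsum4 ?hsum5 /pt /=.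
cbv [hx1 hx2 hx3 hx4 hx5].
apply: cross; lra.
Qed.
Lemma wit10 (R : realFieldType) : exists x : 'I_3 -> R, (forall i, 0 <= x i) /\
  (Hnorm R 3 [:: 2; 2; 2; 1]%N - Hnorm R 3 [:: 3; 1; 1; 1; 1]%N).@[x] < 0.
Proof.
exists (pt R 1 1 2); split; first by move=> i; apply: ler0n.
rewrite mevalB !Hnorm_eval !big_cons !big_nil /= !mulr1 ?hsum1 ?hsum2 ?hsum3 ?hsum4 ?hsum5 /pt /=.
cbv [hx1 hx2 hx3 hx4 hx5].
apply: cross; lra.
Qed.
Lemma wit11 (R : realFieldType) : exists x : 'I_3 -> R, (forall i, 0 <= x i) /\
  (Hnorm R 3 [:: 3; 1; 1; 1; 1]%N - Hnorm R 3 [:: 2; 2; 2; 1]%N).@[x] < 0.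
Proof.
exists (pt R 0 0 1); split; first by move=> i; apply: ler0n.
rewrite mevalB !Hnorm_eval !big_cons !big_nil /= !mulr1 ?hsum1 ?hsum2 ?hsum3 ?hsum4 ?hsum5 /pt /=.
cbv [hx1 hx2 hx3 hx4 hx5].
apply: cross; lra.
Qed.
Lemma wit (R : realFieldType) (lam mu : seq nat) : (lam, mu) \in badlist ->
  exists x : 'I_3 -> R, (forall i, 0 <= x i) /\ (Hnorm R 3 mu - Hnorm R 3 lam).@[x] < 0.
Proof.
rewrite /badlist !inE.
case/orP=> [/eqP [-> ->]|]; first exact: wit0.
case/orP=> [/eqP [-> ->]|]; first exact: wit1.
case/orP=> [/eqP [-> ->]|]; first exact: wit2.
case/orP=> [/eqP [-> ->]|]; first exact: wit3.
case/orP=> [/eqP [-> ->]|]; first exact: wit4.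
case/orP=> [/eqP [-> ->]|]; first exact: wit5.
case/orP=> [/eqP [-> ->]|]; first exact: wit6.
case/orP=> [/eqP [-> ->]|]; first exact: wit7.
case/orP=> [/eqP [-> ->]|]; first exact: wit8.
case/orP=> [/eqP [-> ->]|]; first exact: wit9.
case/orP=> [/eqP [-> ->]|]; first exact: wit10.
by move/eqP => [-> ->]; exact: wit11.
Qed.

Definition domb (mu lam : seq nat) : bool :=
  all (fun k => sumn (take k lam) <= sumn (take k mu))%N (iota 0 (size lam + size mu).+1).

Lemma dombP mu lam : dominates mu lam <-> domb mu lam.
Proof.
split.
  by move=> H; apply/allP => k _; exact: H.
move/allP => H k; case: (leqP k (size lam + size mu)) => hk.
  by apply: H; rewrite mem_iota; lia.
have := H (size lam + size mu) _; rewrite mem_iota => /(_ ltac:(lia)).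
by rewrite !take_oversize //; lia.
Qed.

Lemma allpairs_check : all (fun p => (psize p.1 != psize p.2) || domb p.2 p.1 || domb p.1 p.2 || (p \in badlist))
  [seq (a, b) | a <- plist, b <- plist].
Proof. by []. Qed.

Lemma part4 : forall (R : realFieldType) (lam mu : seq nat),
      is_partition lam -> is_partition mu ->
      psize lam = psize mu -> (psize lam <= 7)%N ->
      incomparable lam mu ->
      exists x : 'I_3 -> R, (forall i, 0 <= x i) /\
        (Hnorm R 3 mu - Hnorm R 3 lam).@[x] < 0.
Proof.
move=> R lam mu pl pm e s [n1 n2]; apply: wit.
have hl := enum_part pl s.
have hm : mu \in plist by apply: (enum_part pm); by move: s; rewrite e.
have := allP allpairs_check (lam, mu) (allpairs_f pair hl hm) => /=.
rewrite e eqxx /=.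
have d1 : domb mu lam = false by apply/negP => /dombP.
have d2 : domb lam mu = false by apply/negP => /dombP.
by rewrite d1 d2.
Qed.

Lemma part3 : incomparable [:: 4; 4]%N [:: 5; 2; 1]%N.
Proof. by split => H; [have := H 2%N | have := H 1%N]. Qed.


Lemma sqsubstB (R : comRingType) (p q : {mpoly R[3]}) : sqsubst (p - q) = sqsubst p - sqsubst q.
Proof. by rewrite /sqsubst comp_mpolyB. Qed.

Lemma part1 : exists s : seq (rat * {mpoly rat[3]}),
      size s = 41%N /\
      sos_cert (sqsubst (Hnorm rat 3 [:: 4; 4]%N - Hnorm rat 3 [:: 5; 2; 1]%N)) s.
Proof.
have L : sqsubst (Hnorm rat 3 [:: 4; 4]%N - Hnorm rat 3 [:: 5; 2; 1]%N) =
  (15 * 15 : rat)^-1 *: (hx4 ('X_0 ^+ 2) ('X_1 ^+ 2) ('X_2 ^+ 2) * hx4 ('X_0 ^+ 2) ('X_1 ^+ 2) ('X_2 ^+ 2)) -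
  (21 * (6 * 3) : rat)^-1 *: (hx5 ('X_0 ^+ 2) ('X_1 ^+ 2) ('X_2 ^+ 2) * (hx2 ('X_0 ^+ 2) ('X_1 ^+ 2) ('X_2 ^+ 2) * hx1 ('X_0 ^+ 2) ('X_1 ^+ 2) ('X_2 ^+ 2))).
  rewrite sqsubstB !Hnorm_sq !big_cons !big_nil !mulr1 !hsum4 !hsum5 !hsum2 !hsum1.
  have e4 : hx4 1 1 1 = 15 :> rat by rewrite /hx4; ring.
  have e5 : hx5 1 1 1 = 21 :> rat by rewrite /hx5; ring.
  have e2 : hx2 1 1 1 = 6 :> rat by rewrite /hx2; ring.
  have e1 : hx1 1 1 1 = 3 :> rat by rewrite /hx1; ring.
  by rewrite e4 e5 e2 e1.
exists [seq (cfg rat t.1, t.2) | t <- rawg 'X_0 'X_1 'X_2]; split; first by rewrite size_map.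
split; first exact: all_cf.
rewrite L big_map.
exact: (part1_gen 'X_0 'X_1 'X_2).
Qed.



Theorem theorem1p2 :
  (* (H_44 - H_521)(x1^2,x2^2,x3^2) is a positive rational combination of 41 squares
     of polynomials with rational coefficients *)
  (exists s : seq (rat * {mpoly rat[3]}),
      size s = 41%N /\
      sos_cert (sqsubst (Hnorm rat 3 [:: 4; 4]%N - Hnorm rat 3 [:: 5; 2; 1]%N)) s) /\
  (* H_44 - H_521 >= 0 on the nonnegative orthant *)
  (forall (R : realFieldType) (x : 'I_3 -> R),
      (forall i, 0 <= x i) ->
      0 <= (Hnorm R 3 [:: 4; 4]%N - Hnorm R 3 [:: 5; 2; 1]%N).@[x]) /\
  (* (4,4) and (5,2,1) are incomparable in dominance order *)
  incomparable [:: 4; 4]%N [:: 5; 2; 1]%N /\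
  (* degree minimality *)
  (forall (R : realFieldType) (lam mu : seq nat),
      is_partition lam -> is_partition mu ->
      psize lam = psize mu -> (psize lam <= 7)%N ->
      incomparable lam mu ->
      exists x : 'I_3 -> R, (forall i, 0 <= x i) /\
        (Hnorm R 3 mu - Hnorm R 3 lam).@[x] < 0).
Proof.
split; first exact: part1.
split; first exact: part2.
split; first exact: part3.
exact: part4.
Qed.
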